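(* Let $k\ge2$ and $\mathcal{R}=\mathbb{C}[\xi_0,\xi_1,\xi_2,\xi_3]$. The sequence $\mathcal{R}^{k+1}\xleftarrow{D_0^{(k)}(\xi)^t}\mathcal{R}^{2k}\xleftarrow{D_1^{(k)}(\xi)^t}\mathcal{R}^{k-1}$ is exact, i.e. $\ker D_0^{(k)}(\xi)^t=\operatorname{Im}D_1^{(k)}(\xi)^t$ in $\mathcal{R}^{2k}$.
   Context: Put $a=\frac1i(\xi_0-i\xi_1)$, $c=\frac1i(\xi_0+i\xi_1)$, $b=\frac1i(\xi_2-i\xi_3)$, $d=\frac1i(\xi_2+i\xi_3)$ (polynomials in $\mathcal{R}$). $D_0^{(k)}(\xi)$ is the $(2k)\times(k+1)$ polynomial matrix whose row $2j$ ($j=0,\dots,k-1$, indices from $0$) has $-d$ in column $j$ and $-c$ in column $j+1$, and whose row $2j+1$ has $a$ in column $j$ and $-b$ in column $j+1$, all other entries $0$. $D_1^{(k)}(\xi)$ is the $(k-1)\times(2k)$ matrix whose row $j$ ($j=0,\dots,k-2$) has $-a,-d,b,-c$ in columns $2j,2j+1,2j+2,2j+3$ and zeros elsewhere. $t$ denotes transpose; the matrices act on column vectors of polynomials. *)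

(* Defs.v *)
From mathcomp Require Import all_boot all_algebra.
From mathcomp Require Import complex.
From mathcomp Require Import Rstruct.
From mathcomp Require Import mpoly.
Set Implicit Arguments.
Unset Strict Implicit.
Unset Printing Implicit Defensive.
Import GRing.Theory.
Local Open Scope ring_scope.

Definition CC : numClosedFieldType := complex Rdefinitions.R.

Definition Rpoly := {mpoly CC[4]}.

Definition xi (n : 'I_4) : Rpoly := 'X_n.

Definition pa : Rpoly := ('i : CC)^-1 *: (xi 0 - ('i : CC) *: xi 1).
Definition pc : Rpoly := ('i : CC)^-1 *: (xi 0 + ('i : CC) *: xi 1).
Definition pb : Rpoly := ('i : CC)^-1 *: (xi 2 - ('i : CC) *: xi 3).
Definition pd : Rpoly := ('i : CC)^-1 *: (xi 2 + ('i : CC) *: xi 3).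

Definition D0 (k : nat) : 'M[Rpoly]_(2 * k, k.+1) :=
  \matrix_(r < 2 * k, col < k.+1)
    let j := (r %/ 2)%N in
    if ~~ odd r then
      (if col == j :> nat then - pd
       else if col == j.+1 :> nat then - pc else 0)
    else
      (if col == j :> nat then pa
       else if col == j.+1 :> nat then - pb else 0).

Definition D1 (k : nat) : 'M[Rpoly]_(k.-1, 2 * k) :=
  \matrix_(j < k.-1, col < 2 * k)
    if col == (2 * j)%N :> nat then - pa
    else if col == (2 * j).+1 :> nat then - pd
    else if col == (2 * j).+2 :> nat then pb
    else if col == (2 * j).+3 :> nat then - pc
    else 0.

(* Main.v *)
Require Import Defs.
From mathcomp Require Import all_boot all_algebra.
From mathcomp Require Import complex Rstruct mpoly.
From mathcomp Require Import ring zify.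
Import GRing.Theory Num.Theory.
Local Open Scope ring_scope.
Definition J : Rpoly := (('i : CC)^-1)%:MP.
Definition X (i : 'I_4) : Rpoly := 'X_i.

Lemma scaleJ (c : CC) (p : Rpoly) : c *: p = c%:MP * p.
Proof. by rewrite mul_mpolyC. Qed.

Lemma paE : pa = J * X 0 - X 1.
Proof.
rewrite /pa /xi /J /X scalerBr scalerA mulVf ?neq0Ci // scale1r -mul_mpolyC //.
Qed.
Lemma pcE : pc = J * X 0 + X 1.
Proof.
rewrite /pc /xi /J /X scalerDr scalerA mulVf ?neq0Ci // scale1r -mul_mpolyC //.
Qed.
Lemma pbE : pb = J * X 2 - X 3.
Proof.
rewrite /pb /xi /J /X scalerBr scalerA mulVf ?neq0Ci // scale1r -mul_mpolyC //.
Qed.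
Lemma pdE : pd = J * X 2 + X 3.
Proof.
rewrite /pd /xi /J /X scalerDr scalerA mulVf ?neq0Ci // scale1r -mul_mpolyC //.
Qed.

Definition sigt : 4.-tuple Rpoly :=
  [tuple (if i == 1 :> 'I_4 then J * X 0 else X i) | i < 4].
Definition sig (p : Rpoly) : Rpoly := p \mPo sigt.

Lemma sigX i : sig (X i) = if i == 1 :> 'I_4 then J * X 0 else X i.
Proof. by rewrite /sig /X comp_mpolyXU -tnth_nth tnth_mktuple. Qed.

Lemma sigJ : sig J = J.
Proof. by rewrite /sig /J comp_mpolyC. Qed.

Lemma sigM p q : sig (p * q) = sig p * sig q.
Proof. by rewrite /sig rmorphM. Qed.
Lemma sigD p q : sig (p + q) = sig p + sig q.
Proof. by rewrite /sig comp_mpolyD. Qed.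

Definition Qa (p : Rpoly) := exists u, p = sig p + pa * u.

Lemma QaM p q : Qa p -> Qa q -> Qa (p * q).
Proof.
move=> [u Hu] [v Hv]; exists (u * (sig q + pa * v) + sig p * v).
rewrite sigM {1}Hu {1}Hv.
clear Hu Hv; move: (sig p) (sig q) pa u v => x y z u' v'; ring.
Qed.

Lemma Qa1 : Qa 1.
Proof. by exists 0; rewrite /sig comp_mpoly1 mulr0 addr0. Qed.

Lemma QaX i : Qa (X i).
Proof.
rewrite /Qa sigX; case: eqP => [->|_]; last by exists 0; rewrite mulr0 addr0.
exists (-1); rewrite paE; move: J (X 0) (X 1) => x y z; ring.
Qed.

Lemma QaXn i e : Qa (X i ^+ e).
Proof.
elim: e => [|e IH]; first by rewrite expr0; exact: Qa1.
by rewrite exprS; apply: QaM; [exact: (QaX i) | exact: IH].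
Qed.

Lemma Qall p : Qa p.
Proof.
elim/mpolyind: p => [|c m p _ _ [u Hu]].
  by exists 0; rewrite /sig comp_mpoly0 mulr0 addr0.
have HX : Qa 'X_[m].
  rewrite mpolyXE_id; apply: (big_ind Qa Qa1 QaM) => i _.
  exact: QaXn.
case: HX => v Hv; exists (c%:MP * v + u).
rewrite sigD /sig comp_mpolyZ -/(sig _) -/(sig p) !scaleJ {1}Hv {1}Hu.
clear Hu Hv; move: (sig 'X_[m]) (sig p) pa u v c%:MP => x y z u' v' w; ring.
Qed.

Definition pt (j : 'I_4) : 'I_4 -> CC := fun i => (i == j)%:R.

Lemma evJ v : J.@[v] = ('i : CC)^-1.
Proof. by rewrite /J mevalC. Qed.

Lemma pa_neq0 : pa != 0.
Proof.
apply/negP => /eqP H; have := congr1 (meval (pt 0)) H.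
rewrite paE mevalB mevalM evJ /X !mevalXU /pt /= meval0 mulr1 subr0.
by apply/eqP; rewrite invr_eq0 neq0Ci.
Qed.

Lemma pd_neq0 : pd != 0.
Proof.
apply/negP => /eqP H; have := congr1 (meval (pt 3)) H.
rewrite pdE mevalD mevalM evJ /X !mevalXU /pt /= meval0 mulr0 add0r.
by apply/eqP; apply: oner_neq0.
Qed.

Lemma cabd_neq0 : pc * pa + pb * pd != 0.
Proof.
apply/negP => /eqP H; have := congr1 (meval (pt 0)) H.
rewrite paE pbE pcE pdE !(mevalB, mevalD, mevalM) evJ /X !mevalXU /pt /= meval0.
rewrite !mulr1 !mulr0 !addr0 !subr0 mulr0 addr0.
by apply/eqP; rewrite mulf_neq0 // invr_eq0 neq0Ci.
Qed.

Lemma key p q : pd * p = pa * q -> exists u, p = pa * u /\ q = pd * u.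
Proof.
move=> H.
have Hs := congr1 sig H; rewrite !sigM in Hs.
have sa : sig pa = 0.
  by rewrite paE /sig comp_mpolyB -/(sig _) -/(sig _) sigM sigJ !sigX /= subrr.
have sd : sig pd = pd.
  by rewrite pdE sigD sigM sigJ !sigX.
rewrite sa sd mul0r in Hs.
have sp : sig p = 0.
  by move/eqP: Hs; rewrite mulf_eq0 (negbTE pd_neq0) /= => /eqP.
case: (Qall p) => u Hu; rewrite sp add0r in Hu.
exists u; split => //.
apply/eqP; rewrite -subr_eq0; apply/eqP.
have : pa * (q - pd * u) = 0.
  by rewrite mulrBr -H Hu mulrCA subrr.
by move/eqP; rewrite mulf_eq0 (negbTE pa_neq0) /= => /eqP.
Qed.

Definition Wm {R : comRingType} (W : nat -> R) j := if j is j'.+1 then W j' else 0.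
Definition imP {R : comRingType} (a b : R) (W : nat -> R) j := - a * W j + b * Wm W j.
Definition EE {R : comRingType} (a b c d : R) (P Q : nat -> R) m :=
  - d * P m + a * Q m - c * Wm P m - b * Wm Q m.

Lemma E_im {R : comRingType} (a b c d : R) W m :
  EE a b c d (imP a b W) (imP d (-c) W) m = 0.
Proof. rewrite /EE /imP /Wm; case: m => [|[|m]] /=; ring. Qed.

Lemma E_sub {R : comRingType} (a b c d : R) P Q P0 Q0 m :
  EE a b c d (fun j => P j - P0 j) (fun j => Q j - Q0 j) m =
  EE a b c d P Q m - EE a b c d P0 Q0 m.
Proof. rewrite /EE /Wm; case: m => [|m] /=; ring. Qed.

Lemma imP_add {R : comRingType} (a b : R) W W' j :
  imP a b (fun i => W i + W' i) j = imP a b W j + imP a b W' j.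
Proof. rewrite /imP /Wm; case: j => [|j] /=; ring. Qed.


Lemma fwd {R : comRingType} (a b c d : R)
  (key : forall p q, d * p = a * q -> exists u, p = a * u /\ q = d * u)
  (nz : forall u, (c * a + b * d) * u = 0 -> u = 0) K :
  forall t n, (n + t).+1 = K -> forall P Q : nat -> R,
  (forall j, (j < n)%N -> P j = 0 /\ Q j = 0) ->
  (forall j, (K <= j)%N -> P j = 0 /\ Q j = 0) ->
  (forall m, EE a b c d P Q m = 0) ->
  exists W : nat -> R, (forall j, (K.-1 <= j)%N -> W j = 0) /\
     forall j, P j = imP a b W j /\ Q j = imP d (-c) W j.
Proof.
have Wm0 : forall (P : nat -> R) n, (forall j, (j < n)%N -> P j = 0) -> Wm P n = 0.
  by move=> P [|n] H //=; apply: H.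
elim=> [|t IH] n Hn P Q Hlow Hhigh HE.
- rewrite addn0 in Hn.
  have EPn := HE n.
  have h1 : Wm P n = 0 by apply: Wm0 => j /Hlow [].
  have h2 : Wm Q n = 0 by apply: Wm0 => j /Hlow [].
  rewrite /EE h1 h2 in EPn.
  have [u [Hp Hq]] : exists u, P n = a * u /\ Q n = d * u.
    have Hdp : d * P n = a * Q n.
      rewrite -[d * P n]addr0 -EPn; ring.
    exact: key.
  have EPn1 := HE n.+1.
  have [h3 h4] := Hhigh n.+1 (eq_leq (esym Hn)).
  rewrite /EE /Wm /= h3 h4 Hp Hq in EPn1.
  have u0 : u = 0.
    by apply: nz; rewrite -[RHS]oppr0 -EPn1; ring.
  have z : forall j, P j = 0 /\ Q j = 0.
    move=> j; case: (ltngtP j n) => [/Hlow //|hj|->]; last by rewrite Hp Hq u0 !mulr0.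
    by apply: Hhigh; rewrite -Hn.
  have imP0 : forall (x y : R) j, imP x y (fun _ => 0) j = 0.
    by move=> x y [|j]; rewrite /imP /Wm /= !mulr0 addr0.
  exists (fun _ => 0); split => // j.
  by rewrite !imP0; apply: z.
- have h1 : Wm P n = 0 by apply: Wm0 => j /Hlow [].
  have h2 : Wm Q n = 0 by apply: Wm0 => j /Hlow [].
  have EPn := HE n.
  rewrite /EE h1 h2 in EPn.
  have [u [Hp Hq]] : exists u, P n = a * u /\ Q n = d * u.
    have Hdp : d * P n = a * Q n.
      rewrite -[d * P n]addr0 -EPn; ring.
    exact: key.
  pose W0 := fun j => if j == n then - u else 0.
  have imW0 : forall (x y : R) j, j != n -> j != n.+1 -> imP x y W0 j = 0.
    move=> x y [|j] hj hj1; rewrite /imP /Wm /W0 /= (negbTE hj).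
      by rewrite !mulr0 addr0.
    have hj' : (j == n) = false by apply/negbTE; apply: contraNneq hj1 => ->.
    by rewrite hj' !mulr0 addr0.
  have imW0n : forall (x y : R), imP x y W0 n = x * u.
    move=> x y; rewrite /imP /W0 eqxx (_ : Wm _ n = 0) ?mulr0 ?addr0 ?mulrN ?mulNr ?opprK //.
    by apply: Wm0 => j hj; rewrite /W0 ltn_eqF.
  have Hn' : (n.+1 + t).+1 = K by rewrite addSnnS.
  pose P' := fun j => P j - imP a b W0 j.
  pose Q' := fun j => Q j - imP d (-c) W0 j.
  have H1' : forall j, (j < n.+1)%N -> P' j = 0 /\ Q' j = 0.
    rewrite /P' /Q'; move=> j; rewrite ltnS leq_eqVlt => /orP [/eqP ->|hj].
      by rewrite !imW0n Hp Hq !subrr.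
    have [hP hQ] := Hlow j hj.
    by rewrite !imW0 ?hP ?hQ ?subrr //; lia.
  have H2' : forall j, (K <= j)%N -> P' j = 0 /\ Q' j = 0.
    rewrite /P' /Q'; move=> j hj; have [hP hQ] := Hhigh j hj.
    have hjn : j != n by lia.
    have hjn1 : j != n.+1 by lia.
    by rewrite !imW0 // hP hQ subrr.
  have H3' : forall m, EE a b c d P' Q' m = 0.
    by move=> m; rewrite /P' /Q' E_sub HE E_im subrr.
  have [W' [HW'1 HW'2]] := IH n.+1 Hn' P' Q' H1' H2' H3'.
  exists (fun j => W' j + W0 j); split.
    move=> j hj; rewrite HW'1 // /W0 (_ : (j == n) = false) ?addr0 //.
    lia.
  move=> j; have [H1 H2] := HW'2 j.
  by rewrite !imP_add -H1 -H2 !subrK.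
Qed.

Definition ext {R : zmodType} {n} (v : 'cV[R]_n) (i : nat) : R :=
  if (insub i : option 'I_n) is Some j then v j 0 else 0.

Arguments ext : simpl never.

Lemma ext_ord {R : zmodType} n (v : 'cV[R]_n) (i : 'I_n) : ext v i = v i 0.
Proof.
rewrite /ext; case: insubP => [j _ /val_inj -> //|]; by rewrite ltn_ord.
Qed.

Lemma ext_out {R : zmodType} n (v : 'cV[R]_n) i : (n <= i)%N -> ext v i = 0.
Proof.
move=> h; rewrite /ext; case: insubP => [j hj _|//]; by rewrite ltnNge h in hj.
Qed.

Lemma sum_ind {R : pzRingType} n (v : 'cV[R]_n) (x : R) (c : nat -> bool) N :
  (forall r, c r -> r = N) ->
  \sum_(r < n) (if c r then x * v r 0 else 0) = if c N then x * ext v N else 0.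
Proof.
move=> H; case: (ltnP N n) => hN.
  rewrite (bigD1 (Ordinal hN)) //= big1 ?addr0.
    by rewrite -[N]/(nat_of_ord (Ordinal hN)) ext_ord.
  move=> r hr; case: ifP => // /H hrN; exfalso; move: hr => /eqP; apply.
  by apply: val_inj.
rewrite big1 ?ext_out ?mulr0; first by case: (c N).
  by [].
move=> r _; case: ifP => // /H e; have := ltn_ord r; lia.
Qed.

Lemma oddE r : odd r = (r %% 2 == 1)%N.
Proof. by rewrite modn2; case: odd. Qed.

Lemma ifM {R : pzRingType} (b : bool) (x y : R) :
  (if b then x else 0) * y = if b then x * y else 0.
Proof. by case: b; rewrite ?mul0r. Qed.

Definition c1 (m r : nat) := ~~ odd r && (m == r %/ 2)%N.
Definition c2 (m r : nat) := odd r && (m == r %/ 2)%N.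
Definition c3 (m r : nat) := ~~ odd r && (m == (r %/ 2).+1)%N.
Definition c4 (m r : nat) := odd r && (m == (r %/ 2).+1)%N.

Lemma D0_entry (r m : nat) :
  (let j := (r %/ 2)%N in
    if ~~ odd r then
      (if m == j :> nat then - pd
       else if m == j.+1 :> nat then - pc else 0)
    else
      (if m == j :> nat then pa
       else if m == j.+1 :> nat then - pb else 0)) =
  (if c1 m r then - pd else 0) +
  (if c2 m r then pa else 0) +
  (if c3 m r then - pc else 0) +
  (if c4 m r then - pb else 0).
Proof.
rewrite /c1 /c2 /c3 /c4 /=; move: (r %/ 2)%N => j.
case E1: (m == j); case E2: (m == j.+1); case: (odd r) => /=;
  rewrite ?addr0 ?add0r //; exfalso; move/eqP: E1; move/eqP: E2; lia.
Qed.

Definition PP {n : nat} (v : 'cV[Rpoly]_n) j := ext v (2 * j)%N.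
Definition QQ {n : nat} (v : 'cV[Rpoly]_n) j := ext v (2 * j).+1.

Lemma ifF {T} (x y : T) : (if false then x else y) = y. Proof. by []. Qed.
Lemma ifT {T} (x y : T) : (if true then x else y) = x. Proof. by []. Qed.
Lemma Wm0 {R : comRingType} (W : nat -> R) : Wm W 0 = 0. Proof. by []. Qed.

Lemma sum_indR n (v : 'cV[Rpoly]_n) (x : Rpoly) (c : nat -> bool) N :
  (forall r, c r -> r = N) ->
  \sum_(r < n) (if c r then x * v r 0 else 0) = if c N then x * ext v N else 0.
Proof. exact: sum_ind. Qed.




Definition e1 (col r : nat) := (col == 2 * r)%N.
Definition e2 (col r : nat) := (col == (2 * r).+1)%N.
Definition e3 (col r : nat) := (col == (2 * r).+2)%N.
Definition e4 (col r : nat) := (col == (2 * r).+3)%N.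

Lemma e1E col r : e1 col r = (col == 2 * r)%N. Proof. by []. Qed.
Lemma e2E col r : e2 col r = (col == (2 * r).+1)%N. Proof. by []. Qed.
Lemma e3E col r : e3 col r = (col == (2 * r).+2)%N. Proof. by []. Qed.
Lemma e4E col r : e4 col r = (col == (2 * r).+3)%N. Proof. by []. Qed.
Opaque e1 e2 e3 e4.

Lemma D1_entry (col j : nat) :
  (if col == (2 * j)%N :> nat then - pa
    else if col == (2 * j).+1 :> nat then - pd
    else if col == (2 * j).+2 :> nat then pb
    else if col == (2 * j).+3 :> nat then - pc
    else 0) =
  (if e1 col j then - pa else 0) + (if e2 col j then - pd else 0) +
  (if e3 col j then pb else 0) + (if e4 col j then - pc else 0).
Proof.
rewrite ?e1E ?e2E ?e3E ?e4E.
case E1: (col == 2 * j)%N; case E2: (col == (2 * j).+1)%N;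
case E3: (col == (2 * j).+2)%N; case E4: (col == (2 * j).+3)%N;
  rewrite /= ?addr0 ?add0r //; exfalso;
  move/eqP: E1; move/eqP: E2; move/eqP: E3; move/eqP: E4; lia.
Qed.


Lemma ifMR (b : bool) (x y : Rpoly) :
  (if b then x else 0) * y = if b then x * y else 0.
Proof. by case: b; rewrite ?mul0r. Qed.

Lemma ifsum4M {R : comRingType} (b1 b2 b3 b4 : bool) (x1 x2 x3 x4 y : R) :
  ((if b1 then x1 else 0) + (if b2 then x2 else 0) + (if b3 then x3 else 0) + (if b4 then x4 else 0)) * y =
  (if b1 then x1 * y else 0) + (if b2 then x2 * y else 0) + (if b3 then x3 * y else 0) + (if b4 then x4 * y else 0).
Proof. by case: b1; case: b2; case: b3; case: b4; rewrite !(mulrDl, mul0r). Qed.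

Lemma D1_entryM (col j : nat) (y : Rpoly) :
  (if col == (2 * j)%N :> nat then - pa
    else if col == (2 * j).+1 :> nat then - pd
    else if col == (2 * j).+2 :> nat then pb
    else if col == (2 * j).+3 :> nat then - pc
    else 0) * y =
  (if e1 col j then - pa * y else 0) + (if e2 col j then - pd * y else 0) +
  (if e3 col j then pb * y else 0) + (if e4 col j then - pc * y else 0).
Proof. by rewrite D1_entry ifsum4M. Qed.

Definition ite {T} (b : bool) (x y : T) := if b then x else y.
Lemma iteT {T} (x y : T) : ite true x y = x. Proof. by []. Qed.
Lemma iteF {T} (x y : T) : ite false x y = y. Proof. by []. Qed.
Lemma negF : (~~ false) = true. Proof. by []. Qed.

Lemma sum4 n (v : 'cV[Rpoly]_n) (x1 x2 x3 x4 : Rpoly) (c1 c2 c3 c4 : nat -> bool) N1 N2 N3 N4 :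
  (forall r, c1 r -> r = N1) -> (forall r, c2 r -> r = N2) ->
  (forall r, c3 r -> r = N3) -> (forall r, c4 r -> r = N4) ->
  \sum_(r < n) ((if c1 r then x1 * v r 0 else 0) + (if c2 r then x2 * v r 0 else 0) +
               (if c3 r then x3 * v r 0 else 0) + (if c4 r then x4 * v r 0 else 0)) =
  ite (c1 N1) (x1 * ext v N1) 0 + ite (c2 N2) (x2 * ext v N2) 0 +
  ite (c3 N3) (x3 * ext v N3) 0 + ite (c4 N4) (x4 * ext v N4) 0.
Proof.
move=> h1 h2 h3 h4; rewrite !big_split /=.
by rewrite (sum_indR n v x1 _ _ h1) (sum_indR n v x2 _ _ h2) (sum_indR n v x3 _ _ h3) (sum_indR n v x4 _ _ h4).
Qed.


Lemma D0tv k (v : 'cV[Rpoly]_(2 * k)) (m : 'I_k.+1) :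
  ((D0 k)^T *m v) m 0 = EE pa pb pc pd (PP v) (QQ v) m.
Proof.
rewrite mxE; under eq_bigr => r _ do rewrite !mxE D0_entry ifsum4M.
have h1 : forall r, c1 m r -> r = (2 * m)%N.
  by move=> r; rewrite /c1 => /andP []; rewrite oddE => g1 /eqP g2; lia.
have h2 : forall r, c2 m r -> r = (2 * m).+1.
  by move=> r; rewrite /c2 => /andP []; rewrite oddE => g1 /eqP g2; lia.
have h3 : forall r, c3 m r -> r = (2 * m).-2.
  by move=> r; rewrite /c3 => /andP []; rewrite oddE => g1 /eqP g2; lia.
have h4 : forall r, c4 m r -> r = (2 * m).-1.
  by move=> r; rewrite /c4 => /andP []; rewrite oddE => g1 /eqP g2; lia.
rewrite (@sum4 _ v (-pd) pa (-pc) (-pb) _ _ _ _ _ _ _ _ h1 h2 h3 h4).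
rewrite /c1 /c2 /c3 /c4 !oddE.
have -> : ((2 * m) %% 2 == 1)%N = false by lia.
have -> : ((2 * m).+1 %% 2 == 1)%N = true by lia.
have -> : (nat_of_ord m == (2 * m) %/ 2)%N = true by lia.
have -> : (nat_of_ord m == (2 * m).+1 %/ 2)%N = true by lia.
have -> : ((2 * m).-2 %% 2 == 1)%N = false by lia.
have -> : ((2 * m).-1 %% 2 == 1)%N = (0 < m)%N by lia.
have -> : (nat_of_ord m == ((2 * m).-2 %/ 2).+1)%N = (0 < m)%N by lia.
have -> : (nat_of_ord m == ((2 * m).-1 %/ 2).+1)%N = (0 < m)%N by lia.
rewrite negF !andbT !iteT.
rewrite /EE; move: (nat_of_ord m) => {h1 h2 h3 h4}m.
case: (posnP m) => [->|hm0].
  rewrite !iteF !Wm0 /PP /QQ.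
  by move: pa pb pc pd (ext v) => a b c d e; ring.
rewrite ?hm0 ?andbT ?iteT.
have hW : forall W : nat -> Rpoly, Wm W m = W m.-1 by case: m hm0.
rewrite !hW.
have -> : ((2 * m).-2 = 2 * m.-1)%N by lia.
have -> : ((2 * m).-1 = (2 * m.-1).+1)%N by lia.
by rewrite /PP /QQ; move: pa pb pc pd (ext v) => a b c d e; ring.
Qed.

Lemma ite_TFbF {R : zmodType} b (x1 x2 x3 x4 : R) :
  ite true x1 0 + ite false x2 0 + ite b x3 0 + ite false x4 0 = x1 + ite b x3 0.
Proof. by rewrite /ite /= !addr0. Qed.
Lemma ite_FTFb {R : zmodType} b (x1 x2 x3 x4 : R) :
  ite false x1 0 + ite true x2 0 + ite false x3 0 + ite b x4 0 = x2 + ite b x4 0.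
Proof. by rewrite /ite /= add0r addr0. Qed.

Lemma D1tw_even k (w : 'cV[Rpoly]_(k.-1)) (col : 'I_(2 * k)) j :
  nat_of_ord col = (2 * j)%N -> ((D1 k)^T *m w) col 0 = imP pa pb (ext w) j.
Proof.
move=> hc.
rewrite mxE; under eq_bigr => r _ do rewrite !mxE D1_entryM.
have h1 : forall r, e1 col r -> r = j by move=> r; rewrite e1E => /eqP; lia.
have h2 : forall r, e2 col r -> r = j by move=> r; rewrite e2E => /eqP; lia.
have h3 : forall r, e3 col r -> r = j.-1 by move=> r; rewrite e3E => /eqP; lia.
have h4 : forall r, e4 col r -> r = j by move=> r; rewrite e4E => /eqP; lia.
rewrite (@sum4 _ w (-pa) (-pd) pb (-pc) _ _ _ _ _ _ _ _ h1 h2 h3 h4).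
rewrite e1E e2E e3E e4E hc /imP.
have -> : (2 * j == 2 * j)%N = true by lia.
have -> : (2 * j == (2 * j).+1)%N = false by lia.
have -> : (2 * j == (2 * j).+3)%N = false by lia.
have -> : (2 * j == (2 * j.-1).+2)%N = (0 < j)%N by lia.
rewrite ite_TFbF.
move: (ext w) => W.
case: (posnP j) => [->|hj0].
  by rewrite ?iteF Wm0; move: pa pb (W 0) => a b x; ring.
rewrite ?hj0 ?iteT.
have -> : Wm W j = W j.-1 by case: j hj0 {hc h1 h2 h3 h4}.
by move: pa pb pc pd (W j) (W j.-1) => a b c d x y; ring.
Qed.

Lemma D1tw_odd k (w : 'cV[Rpoly]_(k.-1)) (col : 'I_(2 * k)) j :
  nat_of_ord col = (2 * j).+1 -> ((D1 k)^T *m w) col 0 = imP pd (- pc) (ext w) j.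
Proof.
move=> hc.
rewrite mxE; under eq_bigr => r _ do rewrite !mxE D1_entryM.
have h1 : forall r, e1 col r -> r = j by move=> r; rewrite e1E => /eqP; lia.
have h2 : forall r, e2 col r -> r = j by move=> r; rewrite e2E => /eqP; lia.
have h3 : forall r, e3 col r -> r = j by move=> r; rewrite e3E => /eqP; lia.
have h4 : forall r, e4 col r -> r = j.-1 by move=> r; rewrite e4E => /eqP; lia.
rewrite (@sum4 _ w (-pa) (-pd) pb (-pc) _ _ _ _ _ _ _ _ h1 h2 h3 h4).
rewrite e1E e2E e3E e4E hc /imP.
have -> : ((2 * j).+1 == 2 * j)%N = false by lia.
have -> : ((2 * j).+1 == (2 * j).+1)%N = true by lia.
have -> : ((2 * j).+1 == (2 * j).+2)%N = false by lia.
have -> : ((2 * j).+1 == (2 * j.-1).+3)%N = (0 < j)%N by lia.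
rewrite ite_FTFb.
move: (ext w) => W.
case: (posnP j) => [->|hj0].
  by rewrite ?iteF Wm0; move: pa pb pc pd (W 0) => a b c d x; ring.
rewrite ?hj0 ?iteT.
have -> : Wm W j = W j.-1 by case: j hj0 {hc h1 h2 h3 h4}.
by move: pa pb pc pd (W j) (W j.-1) => a b c d x y; ring.
Qed.

Lemma EE_ext {R : comRingType} (a b c d : R) (P Q P' Q' : nat -> R) m :
  (forall j, P j = P' j) -> (forall j, Q j = Q' j) ->
  EE a b c d P Q m = EE a b c d P' Q' m.
Proof. by move=> hP hQ; rewrite /EE /Wm; case: m => [|m]; rewrite !hP !hQ. Qed.

Lemma imP_ext {R : comRingType} (a b : R) (W W' : nat -> R) j :
  (forall i, W i = W' i) -> imP a b W j = imP a b W' j.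
Proof. by move=> h; rewrite /imP /Wm; case: j => [|j]; rewrite !h. Qed.

Lemma nz_cabd u : (pc * pa + pb * pd) * u = 0 -> u = 0.
Proof.
by move/eqP; rewrite mulf_eq0 (negbTE cabd_neq0) /= => /eqP.
Qed.

Theorem proposition4p1 (k : nat) (hk : (2 <= k)%N) :
  forall v : 'cV[Rpoly]_(2 * k),
    (D0 k)^T *m v = 0 <-> exists w : 'cV[Rpoly]_(k.-1), v = (D1 k)^T *m w.
Proof.
move=> v; split.
- move=> H.
  have HE : forall m, EE pa pb pc pd (PP v) (QQ v) m = 0.
    move=> m; case: (ltnP m k.+1) => hm.
      by rewrite -[m]/(nat_of_ord (Ordinal hm)) -D0tv H mxE.
    have hz : forall j, (k <= j)%N -> PP v j = 0 /\ QQ v j = 0.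
      by move=> j hj; rewrite /PP /QQ !ext_out //; lia.
    rewrite /EE /Wm; case: m hm => [//|m] hm.
    have [z1 z2] := hz m.+1 (ltnW hm).
    have [z3 z4] := hz m hm.
    by rewrite z1 z2 z3 z4 !mulr0 subr0 addr0 subr0.
  have Hlow : forall j, (j < 0)%N -> PP v j = 0 /\ QQ v j = 0 by [].
  have Hhigh : forall j, (k <= j)%N -> PP v j = 0 /\ QQ v j = 0.
    by move=> j hj; rewrite /PP /QQ !ext_out //; lia.
  have Hk : (0 + k.-1).+1 = k by lia.
  have [W [HW1 HW2]] := @fwd _ pa pb pc pd key nz_cabd k (k.-1) 0 Hk (PP v) (QQ v) Hlow Hhigh HE.
  exists (\col_(j < k.-1) W j).
  have Hext : forall j, ext (\col_(j < k.-1) W j) j = W j.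
    move=> j; case: (ltnP j k.-1) => hj.
      by rewrite -[j]/(nat_of_ord (Ordinal hj)) ext_ord mxE.
    by rewrite ext_out // HW1.
  apply/matrixP => i j0; rewrite (ord1 j0).
  have Hi : nat_of_ord i = ((i : nat) %/ 2 * 2 + (i : nat) %% 2)%N by rewrite -divn_eq.
  have [ho|he] := boolP (((i : nat) %% 2) == 1)%N.
  + have hi : nat_of_ord i = (2 * ((i : nat) %/ 2)).+1 by lia.
    rewrite (@D1tw_odd k _ i _ hi) (imP_ext _ _ _ _ _ Hext) -(proj2 (HW2 _)) /QQ -hi.
    by rewrite ext_ord.
  + have hi : nat_of_ord i = (2 * ((i : nat) %/ 2))%N by lia.
    rewrite (@D1tw_even k _ i _ hi) (imP_ext _ _ _ _ _ Hext) -(proj1 (HW2 _)) /PP -hi.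
    by rewrite ext_ord.
- move=> [w ->].
  apply/matrixP => m j0; rewrite (ord1 j0) D0tv mxE.
  have hw0 : forall j, (k.-1 <= j)%N -> ext w j = 0 by move=> j hj; rewrite ext_out.
  have hP : forall j, PP ((D1 k)^T *m w) j = imP pa pb (ext w) j.
    move=> j; case: (ltnP j k) => hj.
      have hj2 : (2 * j < 2 * k)%N by lia.
      rewrite /PP -[(2 * j)%N]/(nat_of_ord (Ordinal hj2)) ext_ord.
      by rewrite (@D1tw_even k w (Ordinal hj2) j (erefl _)).
    rewrite /PP ext_out; last by lia.
    rewrite /imP /Wm; case: j hj => [|j] hj; first by lia.
    by rewrite !hw0 ?mulr0 ?addr0 ?oppr0 //; lia.
  have hQ : forall j, QQ ((D1 k)^T *m w) j = imP pd (- pc) (ext w) j.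
    move=> j; case: (ltnP j k) => hj.
      have hj2 : ((2 * j).+1 < 2 * k)%N by lia.
      rewrite /QQ -[(2 * j).+1]/(nat_of_ord (Ordinal hj2)) ext_ord.
      by rewrite (@D1tw_odd k w (Ordinal hj2) j (erefl _)).
    rewrite /QQ ext_out; last by lia.
    rewrite /imP /Wm; case: j hj => [|j] hj; first by lia.
    by rewrite !hw0 ?mulr0 ?addr0 ?oppr0 //; lia.
  by rewrite (EE_ext _ _ _ _ _ _ _ _ _ hP hQ) E_im.
Qed.
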